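(* Let $A$ be a $*$-algebra and $V'$ a unitary representation of $A$. Then $\mathrm{Spec}_A(V')$ is a bounded and closed subset of $\widehat A$.
   Context: Conventions: all vector spaces are complex; an algebra is a unital $\mathbb{C}$-algebra and modules are unital. A $*$-algebra is an algebra $A$ with a map $a\mapsto a^*$ satisfying $a^{**}=a$, $(a+b)^*=a^*+b^*$, $(ab)^*=b^*a^*$, $(\alpha a)^*=\bar\alpha a^*$. A unitary representation of $A$ is a Hilbert space $V$ with a left $A$-module structure such that $\langle au,v\rangle=\langle u,a^*v\rangle$ for all $a\in A$, $u,v\in V$, and each operator $a|_V:v\mapsto av$ is bounded. It is irreducible if it has no closed $A$-submodule other than $0$ and $V$. Two unitary representations are isomorphic if there is a continuous $A$-module isomorphism between them. The unitary dual $\widehat A$ is the set of isomorphism classes $[V]$ of irreducible unitary representations. For $[V]\in\widehat A$ and a unitary representation $V'$, write $V\prec V'$ if for every unit vector $v\in V$, every $\varepsilon>0$ and every finite $F\subseteq A$ there is a unit vector $v'\in V'$ with $|\langle av,v\rangle-\langle av',v'\rangle|<\varepsilon$ for all $a\in F$. The $A$-spectrum of $V'$ is $\mathrm{Spec}_A(V')=\{[V]\in\widehat A: V\prec V'\}$. $\widehat A$ is topologized by the subbasis of sets $N_{V,v,\varepsilon,F}$ ($V$ irreducible unitary, $v\in V$ a unit vector, $\varepsilon>0$, $F\subseteq A$ finite) consisting of all $[U]\in\widehat A$ for which there exists $u\in U$ (not necessarily a unit vector) with $|\langle av,v\rangle-\langle au,u\rangle|<\varepsilon$ for all $a\in F$.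 A subset $S\subseteq\widehat A$ is bounded if $\sup_{[V]\in S}\|a|_V\|<\infty$ for every $a\in A$. *)

(* Defs.v *)
From Stdlib Require Import Reals List.
Open Scope R_scope.

Record C := mkC { Re : R; Im : R }.
Definition C0 : C := mkC 0 0.
Definition C1 : C := mkC 1 0.
Definition Cplus (a b : C) : C := mkC (Re a + Re b) (Im a + Im b).
Definition Copp (a : C) : C := mkC (- Re a) (- Im a).
Definition Cminus (a b : C) : C := Cplus a (Copp b).
Definition Cmult (a b : C) : C :=
  mkC (Re a * Re b - Im a * Im b) (Re a * Im b + Im a * Re b).
Definition Cconj (a : C) : C := mkC (Re a) (- Im a).
Definition Cmod (a : C) : R := sqrt (Re a * Re a + Im a * Im a).

Record HSpace := {
  hcar :> Type;
  hadd : hcar -> hcar -> hcar;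
  hzero : hcar;
  hopp : hcar -> hcar;
  hscal : C -> hcar -> hcar;
  hinner : hcar -> hcar -> C   (* linear in the first argument *)
}.

Definition hnorm {H : HSpace} (x : H) : R := sqrt (Re (hinner H x x)).
Definition hsub {H : HSpace} (x y : H) : H := hadd H x (hopp H y).

Definition converges_to {H : HSpace} (u : nat -> H) (l : H) : Prop :=
  forall eps, 0 < eps -> exists N, forall n, (N <= n)%nat -> hnorm (hsub (u n) l) < eps.

Definition cauchy_seq {H : HSpace} (u : nat -> H) : Prop :=
  forall eps, 0 < eps -> exists N, forall m n, (N <= m)%nat -> (N <= n)%nat ->
    hnorm (hsub (u m) (u n)) < eps.

Definition hilbert_axioms (H : HSpace) : Prop :=
  (forall x y z : H, hadd H x (hadd H y z) = hadd H (hadd H x y) z) /\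
  (forall x y : H, hadd H x y = hadd H y x) /\
  (forall x : H, hadd H x (hzero H) = x) /\
  (forall x : H, hadd H x (hopp H x) = hzero H) /\
  (forall x : H, hscal H C1 x = x) /\
  (forall (a b : C) (x : H), hscal H a (hscal H b x) = hscal H (Cmult a b) x) /\
  (forall (a : C) (x y : H), hscal H a (hadd H x y) = hadd H (hscal H a x) (hscal H a y)) /\
  (forall (a b : C) (x : H), hscal H (Cplus a b) x = hadd H (hscal H a x) (hscal H b x)) /\
  (forall x y z : H, hinner H (hadd H x y) z = Cplus (hinner H x z) (hinner H y z)) /\
  (forall (a : C) (x y : H), hinner H (hscal H a x) y = Cmult a (hinner H x y)) /\
  (forall x y : H, hinner H y x = Cconj (hinner H x y)) /\
  (forall x : H, 0 <= Re (hinner H x x)) /\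
  (forall x : H, hinner H x x = C0 -> x = hzero H) /\
  (forall u : nat -> H, cauchy_seq u -> exists l, converges_to u l).

Record Hilbert := { hspace :> HSpace; hilbert_ax : hilbert_axioms hspace }.

Record AlgOps := {
  acar :> Type;
  aadd : acar -> acar -> acar;
  azero : acar;
  aopp : acar -> acar;
  ascal : C -> acar -> acar;
  amul : acar -> acar -> acar;
  aone : acar;
  astar : acar -> acar
}.

Definition star_alg_axioms (A : AlgOps) : Prop :=
  (forall x y z : A, aadd A x (aadd A y z) = aadd A (aadd A x y) z) /\
  (forall x y : A, aadd A x y = aadd A y x) /\
  (forall x : A, aadd A x (azero A) = x) /\
  (forall x : A, aadd A x (aopp A x) = azero A) /\
  (forall x : A, ascal A C1 x = x) /\
  (forall (a b : C) (x : A), ascal A a (ascal A b x) = ascal A (Cmult a b) x) /\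
  (forall (a : C) (x y : A), ascal A a (aadd A x y) = aadd A (ascal A a x) (ascal A a y)) /\
  (forall (a b : C) (x : A), ascal A (Cplus a b) x = aadd A (ascal A a x) (ascal A b x)) /\
  (forall x y z : A, amul A x (amul A y z) = amul A (amul A x y) z) /\
  (forall x : A, amul A (aone A) x = x) /\
  (forall x : A, amul A x (aone A) = x) /\
  (forall x y z : A, amul A x (aadd A y z) = aadd A (amul A x y) (amul A x z)) /\
  (forall x y z : A, amul A (aadd A x y) z = aadd A (amul A x z) (amul A y z)) /\
  (forall (a : C) (x y : A), amul A (ascal A a x) y = ascal A a (amul A x y)) /\
  (forall (a : C) (x y : A), amul A x (ascal A a y) = ascal A a (amul A x y)) /\
  (forall x : A, astar A (astar A x) = x) /\
  (forall x y : A, astar A (aadd A x y) = aadd A (astar A x) (astar A y)) /\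
  (forall x y : A, astar A (amul A x y) = amul A (astar A y) (astar A x)) /\
  (forall (a : C) (x : A), astar A (ascal A a x) = ascal A (Cconj a) (astar A x)).

Record StarAlg := { salg :> AlgOps; salg_ax : star_alg_axioms salg }.

(* ||a|_V|| <= M, unfolded *)
Definition op_norm_le {H : HSpace} (f : H -> H) (M : R) : Prop :=
  forall v : H, hnorm (f v) <= M * hnorm v.

Definition urep_axioms (A : StarAlg) (H : Hilbert) (act : A -> H -> H) : Prop :=
  (forall (a b : A) (v : H), act (aadd A a b) v = hadd H (act a v) (act b v)) /\
  (forall (a : A) (u v : H), act a (hadd H u v) = hadd H (act a u) (act a v)) /\
  (forall (c : C) (a : A) (v : H), act (ascal A c a) v = hscal H c (act a v)) /\
  (forall (c : C) (a : A) (v : H), act a (hscal H c v) = hscal H c (act a v)) /\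
  (forall (a b : A) (v : H), act (amul A a b) v = act a (act b v)) /\
  (forall v : H, act (aone A) v = v) /\
  (forall (a : A) (u v : H), hinner H (act a u) v = hinner H u (act (astar A a) v)) /\
  (forall a : A, exists M, op_norm_le (act a) M).

Record URep (A : StarAlg) := {
  rsp :> Hilbert;
  ract : A -> rsp -> rsp;
  rax : urep_axioms A rsp ract
}.
Arguments ract {A} _ _ _.

Definition closed_submodule {A : StarAlg} (V : URep A) (S : V -> Prop) : Prop :=
  S (hzero V) /\
  (forall x y, S x -> S y -> S (hadd V x y)) /\
  (forall c x, S x -> S (hscal V c x)) /\
  (forall a x, S x -> S (ract V a x)) /\
  (forall (u : nat -> V) l, (forall n, S (u n)) -> converges_to u l -> S l).

Definition irreducible {A : StarAlg} (V : URep A) : Prop :=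
  forall S, closed_submodule V S -> (forall x, S x -> x = hzero V) \/ (forall x, S x).

Definition coef {A : StarAlg} (V : URep A) (a : A) (v : V) : C :=
  hinner V (ract V a v) v.

Definition weakly_contained {A : StarAlg} (V V' : URep A) : Prop :=
  forall (v : V) (eps : R) (F : list A), hnorm v = 1 -> 0 < eps ->
    exists v' : V', hnorm v' = 1 /\
      forall a, In a F -> Cmod (Cminus (coef V a v) (coef V' a v')) < eps.

(* Spec_A(V'), as a predicate on (representatives of) points of \hat A *)
Definition Spec {A : StarAlg} (V' : URep A) (U : URep A) : Prop :=
  irreducible U /\ weakly_contained U V'.

Definition N_set {A : StarAlg} (V : URep A) (v : V) (eps : R) (F : list A)
  (U : URep A) : Prop :=
  exists u : U, forall a, In a F -> Cmod (Cminus (coef V a v) (coef U a u)) < eps.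

Definition subbasic {A : StarAlg} (O : URep A -> Prop) : Prop :=
  exists (V : URep A) (v : V) (eps : R) (F : list A),
    irreducible V /\ hnorm v = 1 /\ 0 < eps /\
    forall U, O U <-> N_set V v eps F U.

Definition dual_open {A : StarAlg} (O : URep A -> Prop) : Prop :=
  forall U, irreducible U -> O U ->
    exists Ns : list (URep A -> Prop),
      (forall N, In N Ns -> subbasic N /\ N U) /\
      (forall W, irreducible W -> (forall N, In N Ns -> N W) -> O W).

Definition dual_closed {A : StarAlg} (S : URep A -> Prop) : Prop :=
  dual_open (fun U => ~ S U).

Definition dual_bounded {A : StarAlg} (S : URep A -> Prop) : Prop :=
  forall a : A, exists M : R,
    forall V : URep A, irreducible V -> S V -> op_norm_le (ract V a) M.

(* Main.v *)
Require Import Defs.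
From Stdlib Require Import Reals List Lra Psatz Classical.
Open Scope R_scope.

Lemma Ceq (a b : Defs.C) : Re a = Re b -> Im a = Im b -> a = b.
Proof. destruct a, b; simpl; intros; subst; auto. Qed.

Lemma Cmod_ge0 z : 0 <= Cmod z.
Proof. apply sqrt_pos. Qed.

Lemma Re_le_Cmod z : Rabs (Re z) <= Cmod z.
Proof.
  unfold Cmod. rewrite <- sqrt_Rsqr_abs. apply sqrt_le_1_alt. unfold Rsqr. nra.
Qed.

Lemma Cmod_triangle x y : Cmod (Cplus x y) <= Cmod x + Cmod y.
Proof.
  destruct x as [x1 x2], y as [y1 y2]; unfold Cmod, Cplus; simpl.
  set (X := x1*x1+x2*x2). set (Y := y1*y1+y2*y2).
  assert (HX : 0 <= X) by (unfold X; nra). assert (HY : 0 <= Y) by (unfold Y; nra).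
  pose proof (sqrt_sqrt X HX). pose proof (sqrt_sqrt Y HY).
  pose proof (sqrt_pos X). pose proof (sqrt_pos Y).
  rewrite <- (sqrt_Rsqr (sqrt X + sqrt Y)) by lra.
  apply sqrt_le_1_alt. unfold Rsqr.
  assert (x1*y1+x2*y2 <= sqrt X * sqrt Y).
  { assert ((x1*y1+x2*y2)*(x1*y1+x2*y2) <= (sqrt X * sqrt Y)*(sqrt X * sqrt Y)).
    { replace ((sqrt X * sqrt Y)*(sqrt X * sqrt Y)) with ((sqrt X*sqrt X)*(sqrt Y*sqrt Y)) by ring. rewrite H, H0.
      unfold X, Y. pose proof (Rle_0_sqr (x1*y2 - x2*y1)). unfold Rsqr in *. nra. }
    assert (0 <= sqrt X * sqrt Y) by nra. nra. }
  replace ((x1 + y1) * (x1 + y1) + (x2 + y2) * (x2 + y2)) with (X + Y + 2*(x1*y1+x2*y2)) by (unfold X, Y; ring). replace ((sqrt X + sqrt Y) * (sqrt X + sqrt Y)) with (sqrt X * sqrt X + sqrt Y * sqrt Y + 2 * (sqrt X * sqrt Y)) by ring. lra.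
Qed.

Lemma Cmod_realmul t z : Cmod (Cmult (mkC t 0) z) = Rabs t * Cmod z.
Proof.
  destruct z as [a b]; unfold Cmod, Cmult; simpl.
  replace ((t * a - 0 * b) * (t * a - 0 * b) + (t * b + 0 * a) * (t * b + 0 * a))
    with ((t*t) * (a*a+b*b)) by ring.
  rewrite sqrt_mult_alt by nra.
  rewrite <- sqrt_Rsqr_abs. reflexivity.
Qed.

Lemma Cmod_diff0 z : Cmod (Cminus z z) = 0.
Proof.
  destruct z as [p q]; unfold Cmod, Cminus, Cplus, Copp; simpl.
  replace ((p + - p) * (p + - p) + (q + - q) * (q + - q)) with 0 by ring.
  apply sqrt_0.
Qed.


Ltac hax H := destruct (hilbert_ax H) as (h1&h2&h3&h4&h5&h6&h7&h8&h9&h10&h11&h12&h13&h14).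

Lemma inner_zero_l (H : Hilbert) (y : H) : hinner H (hzero H) y = C0.
Proof.
  hax H. pose proof (h9 (hzero H) (hzero H) y) as E. rewrite h3 in E.
  destruct (hinner H (hzero H) y) as [p q]. unfold Cplus in E; simpl in E.
  injection E; intros; apply Ceq; simpl; lra.
Qed.

Lemma Im_self (H : Hilbert) (x : H) : Im (hinner H x x) = 0.
Proof.
  hax H. pose proof (h11 x x) as E. destruct (hinner H x x) as [p q].
  unfold Cconj in E; injection E; simpl; lra.
Qed.

Lemma Re_self_ge0 (H : Hilbert) (x : H) : 0 <= Re (hinner H x x).
Proof. hax H. apply h12. Qed.

Lemma hnorm_sq (H : Hilbert) (x : H) : hnorm x * hnorm x = Re (hinner H x x).
Proof. unfold hnorm. apply sqrt_sqrt, Re_self_ge0. Qed.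

Lemma hnorm_ge0 (H : Hilbert) (x : H) : 0 <= hnorm x.
Proof. apply sqrt_pos. Qed.

Lemma norm0 (H : Hilbert) (x : H) : hnorm x = 0 -> x = hzero H.
Proof.
  intro E. hax H. apply h13. unfold hnorm in E.
  apply sqrt_eq_0 in E; [|apply h12]. pose proof (Im_self H x).
  destruct (hinner H x x) as [p q]; simpl in *. apply Ceq; simpl; auto.
Qed.

Lemma hnorm_zero (H : Hilbert) : hnorm (hzero H) = 0.
Proof. unfold hnorm. rewrite inner_zero_l. simpl. apply sqrt_0. Qed.

Lemma inner_scal_r (H : Hilbert) (t : R) (x y : H) :
  hinner H x (hscal H (mkC t 0) y) = Cmult (mkC t 0) (hinner H x y).
Proof.
  hax H. rewrite (h11 (hscal H (mkC t 0) y) x), h10, (h11 y x).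
  destruct (hinner H y x) as [p q]. apply Ceq; unfold Cconj, Cmult; simpl; ring.
Qed.

Lemma hnorm_scal (H : Hilbert) (t : R) (x : H) :
  hnorm (hscal H (mkC t 0) x) = Rabs t * hnorm x.
Proof.
  hax H. unfold hnorm. rewrite h10, inner_scal_r.
  pose proof (Im_self H x). destruct (hinner H x x) as [p q]; simpl in *. subst q.
  match goal with |- sqrt ?e = _ => replace e with ((t*t)*p) by ring end.
  rewrite sqrt_mult_alt by nra. rewrite <- sqrt_Rsqr_abs. reflexivity.
Qed.

Ltac rax V := destruct (rax _ V) as (r1&r2&r3&r4&r5&r6&r7&r8).

Lemma act_zero (A : StarAlg) (V : URep A) (a : A) : ract V a (hzero V) = hzero V.
Proof.
  rax V. hax V. pose proof (r2 a (hzero V) (hzero V)) as E. rewrite h3 in E.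
  set (x := ract V a (hzero V)) in *.
  transitivity (hadd V x (hadd V x (hopp V x))).
  - rewrite h4, h3. reflexivity.
  - rewrite h1, <- E. apply h4.
Qed.

Lemma coef_scal (A : StarAlg) (V : URep A) (a : A) (t : R) (v : V) :
  coef V a (hscal V (mkC t 0) v) = Cmult (mkC (t*t) 0) (coef V a v).
Proof.
  rax V. hax V. unfold coef. rewrite r4, h10, inner_scal_r.
  destruct (hinner V (ract V a v) v) as [p q]. apply Ceq; unfold Cmult; simpl; ring.
Qed.

Lemma coef_sq (A : StarAlg) (V : URep A) (a : A) (v : V) :
  Re (coef V (amul A (astar A a) a) v) = hnorm (ract V a v) * hnorm (ract V a v).
Proof.
  rax V. unfold coef. rewrite r5, r7.
  destruct (salg_ax A) as (_&_&_&_&_&_&_&_&_&_&_&_&_&_&_&s16&_).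
  rewrite s16, hnorm_sq. reflexivity.
Qed.

Lemma coef_one (A : StarAlg) (V : URep A) (v : V) :
  coef V (aone A) v = hinner V v v.
Proof. rax V. unfold coef. rewrite r6. reflexivity. Qed.

Lemma bounded_part (A : StarAlg) (V' : URep A) : dual_bounded (Spec V').
Proof.
  intro a. destruct (rax _ V') as (_&_&_&_&_&_&_&r8).
  destruct (r8 a) as [M HM]. exists M. intros V _ [_ HWC] v.
  destruct (Req_dec (hnorm v) 0) as [E|E].
  { rewrite (norm0 _ v E), act_zero, !hnorm_zero. lra. }
  pose proof (hnorm_ge0 _ v) as Hv0.
  set (r := hnorm v) in *.
  assert (Hr : 0 < r) by lra.
  set (w := hscal V (mkC (/r) 0) v).
  assert (Hw : hnorm w = 1).
  { unfold w. rewrite hnorm_scal, Rabs_pos_eq by (left; apply Rinv_0_lt_compat; lra).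
    fold r. field. lra. }
  set (b := amul A (astar A a) a).
  set (x := hnorm (ract V a w)).
  assert (Key : forall eps, 0 < eps -> 0 <= M /\ x * x < M * M + eps).
  { intros eps Heps. destruct (HWC w eps (b :: nil) Hw Heps) as [v' [Hv' Hc]].
    specialize (Hc b (or_introl eq_refl)).
    pose proof (Rle_lt_trans _ _ _ (Re_le_Cmod _) Hc) as HR.
    unfold Cminus, Cplus, Copp in HR; simpl in HR.
    unfold b in HR. rewrite !coef_sq in HR. fold x in HR.
    pose proof (HM v') as HMv. rewrite Hv' in HMv.
    pose proof (hnorm_ge0 _ (ract V' a v')).
    pose proof (Rabs_def2 _ _ HR). split; nra. }
  assert (HM0 : 0 <= M) by (apply (Key 1); lra).
  assert (Hx0 : 0 <= x) by apply hnorm_ge0.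
  assert (Hxx : x * x <= M * M).
  { apply Rnot_lt_le. intro Hlt. destruct (Key (x*x - M*M)) as [_ K]; lra. }
  assert (HxM : x <= M) by nra.
  unfold x, w in HxM. destruct (rax _ V) as (_&_&_&r4&_).
  rewrite r4, hnorm_scal, Rabs_pos_eq in HxM by (left; apply Rinv_0_lt_compat; lra).
  apply (Rmult_le_compat_l r) in HxM; [|lra].
  rewrite <- Rmult_assoc, Rinv_r, Rmult_1_l in HxM by lra. lra.
Qed.

Lemma fold_bound {T : Type} (f : T -> R) (Hf : forall a, 0 <= f a) (F : list T) :
  0 <= fold_right (fun a acc => f a + acc) 0 F /\
  forall a, In a F -> f a <= fold_right (fun a acc => f a + acc) 0 F.
Proof.
  induction F as [|x F [IH1 IH2]]; simpl.
  - split; [lra | intros _ []].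
  - split; [pose proof (Hf x); lra|].
    intros a [<-|Ha]; [lra|]. pose proof (IH2 a Ha); pose proof (Hf x); lra.
Qed.

Lemma closed_part (A : StarAlg) (V' : URep A) : dual_closed (Spec V').
Proof.
  intros U HU HnS.
  assert (HnW : ~ weakly_contained U V') by (intro; apply HnS; split; auto).
  assert (Hex : exists (v : U) eps F, hnorm v = 1 /\ 0 < eps /\
     forall v' : V', hnorm v' = 1 -> exists a, In a F /\
        eps <= Cmod (Cminus (coef U a v) (coef V' a v'))).
  { apply NNPP; intro Hn; apply HnW; intros v eps F Hv He.
    apply NNPP; intro Hn2; apply Hn; exists v, eps, F; split; [|split]; auto.
    intros v' Hv'; apply NNPP; intro Hn3; apply Hn2; exists v'; split; auto.
    intros a Ha; apply Rnot_le_lt; intro; apply Hn3; exists a; auto. }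
  destruct Hex as (v & eps & F & Hv & He & Hbad).
  destruct (fold_bound (fun a => Cmod (coef U a v)) (fun a => Cmod_ge0 _) F) as [HK0 HK].
  set (K := fold_right (fun a acc => Cmod (coef U a v) + acc) 0 F) in *.
  set (d := Rmin (1/2) (eps / (4*(K+1)))).
  assert (Hd0 : 0 < d).
  { unfold d. apply Rmin_glb_lt; [lra|]. apply Rdiv_lt_0_compat; lra. }
  assert (Hd1 : d <= 1/2) by apply Rmin_l.
  assert (Hd2 : d * (4*(K+1)) <= eps).
  { pose proof (Rmin_r (1/2) (eps / (4*(K+1)))) as Q. fold d in Q.
    apply (Rmult_le_compat_r (4*(K+1))) in Q; [|lra].
    unfold Rdiv in Q. rewrite Rmult_assoc, Rinv_l, Rmult_1_r in Q by lra. exact Q. }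
  exists (N_set U v d (aone A :: F) :: nil). split.
  - intros N [<-|[]]. split.
    + exists U, v, d, (aone A :: F). split; [auto|split; [auto|split; [auto|]]].
      intro; tauto.
    + exists v. intros a _. rewrite Cmod_diff0. exact Hd0.
  - intros W HW HN [_ HWC]. destruct (HN _ (or_introl eq_refl)) as [w Hw].
    pose proof (Hw (aone A) (or_introl eq_refl)) as Hw1.
    rewrite !coef_one in Hw1.
    pose proof (Rle_lt_trans _ _ _ (Re_le_Cmod _) Hw1) as HR.
    unfold Cminus, Cplus, Copp in HR; simpl in HR.
    rewrite <- !hnorm_sq, Hv in HR.
    set (s := Re (hinner W w w)) in *.
    assert (Hs0 : 0 <= s) by apply Re_self_ge0.
    pose proof (hnorm_sq _ w) as Hws. fold s in Hws.
    pose proof (Rabs_def2 _ _ HR) as [HR1 HR2].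
    assert (Hs : 1/2 < s) by lra.
    set (r := hnorm w) in *.
    pose proof (hnorm_ge0 _ w) as Hr0. fold r in Hr0.
    assert (Hr : 0 < r) by nra.
    set (k := / r).
    assert (Hk : 0 < k) by (apply Rinv_0_lt_compat; lra).
    set (w1 := hscal W (mkC k 0) w).
    assert (Hw1n : hnorm w1 = 1).
    { unfold w1. rewrite hnorm_scal, Rabs_pos_eq by lra. fold r. unfold k. field. lra. }
    destruct (HWC w1 (eps/2) F Hw1n (ltac:(lra))) as [v' [Hv' Hc]].
    destruct (Hbad v' Hv') as [a [Ha Hge]].
    specialize (Hc a Ha). specialize (Hw a (or_intror Ha)). specialize (HK a Ha).
    unfold w1 in Hc. rewrite coef_scal in Hc.
    set (cU := coef U a v) in *. set (cW := coef W a w) in *. set (cV := coef V' a v') in *.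
    assert (Hkk : k * k = / s).
    { unfold k. rewrite <- Rinv_mult, Hws. reflexivity. }
    assert (Eq : Cminus cU cV = Cplus (Cminus cU cW)
        (Cplus (Cmult (mkC (1 - k*k) 0) cW) (Cminus (Cmult (mkC (k*k) 0) cW) cV))).
    { destruct cU, cW, cV. apply Ceq; unfold Cminus, Cplus, Copp, Cmult; simpl; ring. }
    assert (EqW : cW = Cplus cU (Cmult (mkC (-1) 0) (Cminus cU cW))).
    { destruct cU, cW. apply Ceq; unfold Cminus, Cplus, Copp, Cmult; simpl; ring. }
    assert (HcW : Cmod cW <= K + d).
    { rewrite EqW at 1. eapply Rle_trans; [apply Cmod_triangle|].
      rewrite Cmod_realmul. replace (Rabs (-1)) with 1 by (rewrite Rabs_left; lra). lra. }
    assert (Habs : Rabs (1 - k*k) <= 2 * d).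
    { rewrite Hkk. replace (1 - / s) with ((s - 1) * / s) by (field; lra).
      rewrite Rabs_mult, (Rabs_pos_eq (/ s)) by (left; apply Rinv_0_lt_compat; lra).
      assert (/ s < 2).
      { replace 2 with (/ (1/2)) by field. apply Rinv_lt_contravar; lra. }
      assert (0 < / s) by (apply Rinv_0_lt_compat; lra).
      assert (Rabs (s - 1) <= d) by (apply Rabs_le; lra).
      pose proof (Rabs_pos (s - 1)).
      rewrite (Rmult_comm 2 d). apply Rmult_le_compat; lra. }
    assert (Hmid : Cmod (Cmult (mkC (1 - k*k) 0) cW) <= 2 * d * (K + d)).
    { rewrite Cmod_realmul. apply Rmult_le_compat; auto using Rabs_pos, Cmod_ge0. }
    assert (Htot : Cmod (Cminus cU cV) < d + 2 * d * (K + d) + eps / 2).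
    { rewrite Eq. eapply Rle_lt_trans; [apply Cmod_triangle|].
      pose proof (Cmod_triangle (Cmult (mkC (1 - k*k) 0) cW) (Cminus (Cmult (mkC (k*k) 0) cW) cV)).
      lra. }
    nra.
Qed.

Theorem proposition2p28 (A : StarAlg) (V' : URep A) :
  dual_bounded (Spec V') /\ dual_closed (Spec V').
Proof.
  split; [apply bounded_part | apply closed_part].
Qed.
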